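(* There exists a sequence of natural numbers $B'_1,B'_2,B'_3,\dots$ such that for every finite set $\Omega$, every $A\subseteq\Omega$, and all natural numbers $n,k$, every exact $(n,k)$-cover of $(A,\Omega)$ with $n>B'_{|\Omega|}$ or $k>B'_{|\Omega|}$ is decomposable.
   Context: Let $\Omega$ be a finite set and $A\subseteq\Omega$. An exact $(n,k)$-cover of $(A,\Omega)$ is a finite multiset $C$ of subsets of $\Omega$ (repetitions allowed) such that every element of $A$ belongs to exactly $n+k$ members of $C$ (counted with multiplicity) and every element of $\Omega\setminus A$ belongs to exactly $k$ members of $C$. An exact $(n,k)$-cover $C$ of $(A,\Omega)$ is decomposable if $C$ can be partitioned (as a multiset) into two nonempty submultisets $C_1,C_2$ such that $C_1$ is an exact $(n_1,k_1)$-cover and $C_2$ is an exact $(n_2,k_2)$-cover of $(A,\Omega)$, with $n=n_1+n_2$ and $k=k_1+k_2$. *)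

(* Defs.v *)
From mathcomp Require Import all_boot.
Set Implicit Arguments. Unset Strict Implicit. Unset Printing Implicit Defensive.

(* A finite multiset of subsets of a finite set T is represented by its
   multiplicity function: C S = number of copies of S in C. *)
Definition mcover (T : finType) := {ffun {set T} -> nat}.

Definition depth (T : finType) (C : mcover T) (x : T) : nat :=
  \sum_(S : {set T} | x \in S) C S.

Definition exact_cover (T : finType) (A : {set T}) (n k : nat) (C : mcover T) : Prop :=
  forall x : T, depth C x = (if x \in A then n + k else k).

Definition nonempty_ms (T : finType) (C : mcover T) : Prop :=
  exists S : {set T}, 0 < C S.

Definition decomposable (T : finType) (A : {set T}) (n k : nat) (C : mcover T) : Prop :=
  exists (C1 C2 : mcover T) (n1 k1 n2 k2 : nat),
    [/\ forall S, C S = C1 S + C2 S,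
        nonempty_ms C1, nonempty_ms C2,
        exact_cover A n1 k1 C1 /\ exact_cover A n2 k2 C2
      & n = n1 + n2 /\ k = k1 + k2].

(* Main.v *)
Require Import Defs.
From mathcomp Require Import all_boot.
From Stdlib Require Import Classical ClassicalEpsilon.
From mathcomp Require Import zify.
Set Implicit Arguments. Unset Strict Implicit.
Lemma argmin_ex (u : nat -> nat) i :
  exists j, i <= j /\ forall j', i <= j' -> u j <= u j'.
Proof.
suff H : forall v j, i <= j -> u j <= v -> exists j, i <= j /\ forall j', i <= j' -> u j <= u j'.
  by apply: (H (u i) i).
elim=> [|v IH] j hij hv.
  by exists j; split=> // j' _; move: hv; rewrite leqn0 => /eqP ->.
case: (classic (exists j', i <= j' /\ u j' < u j)) => [[j' [h1 h2]]|hn].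
  by apply: (IH j') => //; rewrite -ltnS; apply: leq_trans h2 hv.
exists j; split=> // j' hj'; rewrite leqNgt; apply/negP => h; apply: hn; by exists j'.
Qed.

Lemma sub_mono (u : nat -> nat) : exists g : nat -> nat,
  forall t, g t < g t.+1 /\ u (g t) <= u (g t.+1).
Proof.
pose am i := proj1_sig (constructive_indefinite_description _ (argmin_ex u i)).
have amP i : i <= am i /\ forall j', i <= j' -> u (am i) <= u j'.
  exact: (proj2_sig (constructive_indefinite_description _ (argmin_ex u i))).
pose g := fix g t := if t is t'.+1 then am (g t').+1 else am 0.
have gS t : g t.+1 = am (g t).+1 by [].
have hs t : exists s, g t = am s /\ s <= g t.
  case: t => [|t]; first by exists 0.
  by exists (g t).+1; split=> //; rewrite gS; case: (amP (g t).+1).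
exists g => t; have lt1 : g t < g t.+1 by rewrite gS; case: (amP (g t).+1).
split=> //; case: (hs t) => s [e hs'].
case: (amP s) => _ h; rewrite e; apply: h; exact: leq_trans hs' (ltnW lt1).
Qed.

Lemma dickson_seq (I : finType) (D : seq I) (f : nat -> I -> nat) :
  exists g : nat -> nat, forall i j, i < j -> g i < g j /\ forall x, x \in D -> f (g i) x <= f (g j) x.
Proof.
elim: D => [|x D [g Hg]].
  exists id => i j hij; split=> //.
have [h Hh] := sub_mono (fun t => f (g t) x).
have Hh' : forall i j, i < j -> h i < h j /\ f (g (h i)) x <= f (g (h j)) x.
  apply: (@homo_ltn _ (fun t => (h t, f (g (h t)) x)) (fun a b => a.1 < b.1 /\ a.2 <= b.2)).
    move=> [y1 y2] [x1 x2] [z1 z2] /= [a b] [c d]; split; [exact: ltn_trans a c | exact: leq_trans b d].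
  by move=> i; exact: Hh.
exists (fun t => g (h t)) => i j hij; have [a b] := Hh' i j hij.
have [c d] := Hg _ _ a; split=> // y; rewrite inE => /orP [/eqP ->|hy] //; exact: d.
Qed.

Lemma dickson (I : finType) (f : nat -> I -> nat) :
  exists i j, i < j /\ forall x, f i x <= f j x.
Proof.
have [g Hg] := dickson_seq (enum I) f.
have [a b] := Hg 0 1 isT.
exists (g 0), (g 1); split=> // x; apply: b; by rewrite mem_enum.
Qed.
Lemma depth_split (T : finType) (C C1 C2 : mcover T) x :
  (forall S, C S = C1 S + C2 S) -> depth C x = depth C1 x + depth C2 x.
Proof. by move=> H; rewrite /depth -big_split; apply: eq_bigr => S _; exact: H. Qed.

Lemma nonempty_exact (T : finType) (A : {set T}) n k (C : mcover T) :
  A != set0 -> exact_cover A n k C -> 0 < n + k -> nonempty_ms C.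
Proof.
move=> /set0Pn [x hx] hC hnk; apply: NNPP => hne.
have : depth C x = 0.
  rewrite /depth big1 // => S _; apply/eqP; rewrite -leqn0 leqNgt; apply/negP => h.
  by apply: hne; exists S.
by rewrite hC hx => h; rewrite h in hnk.
Qed.

Lemma core (T : finType) (A : {set T}) : A != set0 ->
  exists b, forall n k (C : mcover T), exact_cover A n k C -> (b < n \/ b < k) ->
    decomposable A n k C.
Proof.
move=> HA; apply: NNPP => H.
have H' : forall b, exists p : nat * nat * mcover T,
    exact_cover A p.1.1 p.1.2 p.2 /\ (b < p.1.1 \/ b < p.1.2) /\ ~ decomposable A p.1.1 p.1.2 p.2.
  move=> b; apply: NNPP => Hn; apply: H; exists b => n k C Hc Hb; apply: NNPP => Hd.
  by apply: Hn; exists (n, k, C).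
pose F b := proj1_sig (constructive_indefinite_description _ (H' b)).
have FP b : exact_cover A (F b).1.1 (F b).1.2 (F b).2 /\ (b < (F b).1.1 \/ b < (F b).1.2)
    /\ ~ decomposable A (F b).1.1 (F b).1.2 (F b).2.
  exact: (proj2_sig (constructive_indefinite_description _ (H' b))).
pose s := fix s t := if t is t'.+1 then F ((s t').1.1 + (s t').1.2) else F 0.
pose w t := (s t).1.1 + (s t).1.2.
have sP t : exists b, s t = F b by case: t => [|t]; [exists 0 | eexists].
have wS t : w t < w t.+1.
  have [_ [h _]] := FP (w t); rewrite /w /=; rewrite -/(w t).
  by case: h => h; [apply: leq_trans h (leq_addr _ _) | apply: leq_trans h (leq_addl _ _)].
have wlt : forall i j, i < j -> w i < w j.
  by apply: (@homo_ltn _ w (fun a b => a < b)) => //; move=> y x z; apply: ltn_trans.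
have w0 t : 0 < w t.
  case: t => [|t]; last by apply: leq_ltn_trans (wS t).
  have [_ [h _]] := FP 0; rewrite /w /=.
  by case: h => h; [apply: leq_trans h (leq_addr _ _) | apply: leq_trans h (leq_addl _ _)].
pose vec t (z : ({set T} + bool)%type) := match z with
  | inl Z => (s t).2 Z | inr true => (s t).1.1 | inr false => (s t).1.2 end.
have [i [j [hij hv]]] := dickson vec.
have [bj ej] := sP j; have [bi ei] := sP i.
have [Hcj [_ Hndj]] := FP bj; have [Hci _] := FP bi.
rewrite -ej in Hcj Hndj; rewrite -ei in Hci.
apply: Hndj.
have hn : (s i).1.1 <= (s j).1.1 by exact: (hv (inr true)).
have hk : (s i).1.2 <= (s j).1.2 by exact: (hv (inr false)).
have hC S : (s i).2 S <= (s j).2 S by exact: (hv (inl S)).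
pose C2 : mcover T := [ffun S => (s j).2 S - (s i).2 S].
have HS : forall S, (s j).2 S = (s i).2 S + C2 S by move=> S; rewrite ffunE subnKC.
have Hc2 : exact_cover A ((s j).1.1 - (s i).1.1) ((s j).1.2 - (s i).1.2) C2.
  move=> x; have := depth_split x HS; rewrite Hcj Hci.
  case: (x \in A) => h; lia.
have wij := wlt i j hij; rewrite /w in wij.
exists (s i).2, C2, (s i).1.1, (s i).1.2, ((s j).1.1 - (s i).1.1), ((s j).1.2 - (s i).1.2).
split=> //.
- by apply: nonempty_exact HA Hci (w0 i).
- by apply: nonempty_exact HA Hc2 _; lia.
- by split; lia.
Qed.
Lemma fin_bound (U : finType) (P : U -> nat -> Prop) :
  (forall u b b', b <= b' -> P u b -> P u b') -> (forall u, exists b, P u b) ->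
  exists b, forall u, P u b.
Proof.
move=> mono ex.
suff H : forall l : seq U, exists b, forall u, u \in l -> P u b.
  by have [b Hb] := H (enum U); exists b => u; apply: Hb; rewrite mem_enum.
elim=> [|x l [b Hb]]; first by exists 0.
have [b' Hb'] := ex x; exists (maxn b b') => u; rewrite inE => /orP [/eqP ->|hu].
  by apply: mono Hb'; exact: leq_maxr.
by apply: mono (Hb u hu); exact: leq_maxl.
Qed.

Lemma unif (m : nat) : exists b, forall (A : {set 'I_m}), A != set0 ->
  forall n k (C : mcover 'I_m), exact_cover A n k C -> (b < n \/ b < k) -> decomposable A n k C.
Proof.
apply: (fin_bound (P := fun A b => A != set0 -> forall n k (C : mcover 'I_m),
   exact_cover A n k C -> (b < n \/ b < k) -> decomposable A n k C)).
  move=> A b b' hb H hA n k C hC hn; apply: H => //.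
  by case: hn => h; [left|right]; apply: leq_ltn_trans h.
move=> A; case: (boolP (A == set0)) => hA.
  by exists 0.
by have [b Hb] := core hA; exists b => _.
Qed.

Section Transfer.
Variable T : finType.
Local Notation U := ('I_#|T|).
Local Notation f := (@enum_rank T).
Local Notation g := (@enum_val T _).

Definition fwd (S : {set T}) : {set U} := g @^-1: S.
Definition bwd (S' : {set U}) : {set T} := f @^-1: S'.

Lemma bwdK : cancel fwd bwd.
Proof. by move=> S; apply/setP => x; rewrite !inE enum_rankK. Qed.
Lemma fwdK : cancel bwd fwd.
Proof. by move=> S; apply/setP => x; rewrite !inE enum_valK. Qed.

Lemma sum_transfer (F : {set U} -> nat) x :
  \sum_(S' : {set U} | f x \in S') F S' = \sum_(S : {set T} | x \in S) F (fwd S).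
Proof.
rewrite (reindex fwd); last by exists bwd => S _; [exact: bwdK | exact: fwdK].
by apply: eq_bigl => S; rewrite !inE enum_rankK.
Qed.

Lemma transfer (A : {set T}) n k (C : mcover T) :
  exact_cover A n k C ->
  (forall (C' : mcover U), exact_cover (fwd A) n k C' -> decomposable (fwd A) n k C') ->
  decomposable A n k C.
Proof.
move=> hC H.
pose C' : mcover U := [ffun S' => C (bwd S')].
have hC' : exact_cover (fwd A) n k C'.
  move=> u; rewrite -(enum_valK u).
  rewrite /depth sum_transfer.
  under eq_bigr => S _ do rewrite ffunE bwdK.
  by have := hC (g u); rewrite /depth => ->; rewrite !inE enum_valK.
have [C1 [C2 [n1 [k1 [n2 [k2 [HS a1 b1 [e1 e2] hp]]]]]]] := H _ hC'.
pose D1 : mcover T := [ffun S => C1 (fwd S)].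
pose D2 : mcover T := [ffun S => C2 (fwd S)].
have tr (Ci : mcover U) ni ki : exact_cover (fwd A) ni ki Ci ->
    exact_cover A ni ki [ffun S => Ci (fwd S)].
  move=> hi x; rewrite /depth.
  under eq_bigr => S _ do rewrite ffunE.
  rewrite -sum_transfer; have := hi (f x); rewrite /depth => ->.
  by rewrite !inE enum_rankK.
have ne (Ci : mcover U) : nonempty_ms Ci -> nonempty_ms [ffun S => Ci (fwd S)].
  by move=> [S' h]; exists (bwd S'); rewrite ffunE fwdK.
exists D1, D2, n1, k1, n2, k2; split.
- by move=> S; rewrite !ffunE -HS ffunE bwdK.
- exact: ne a1.
- exact: ne b1.
- by split; [exact: tr e1 | exact: tr e2].
- exact: hp.
Qed.
End Transfer.

Lemma fwd_nonempty (T : finType) (A : {set T}) : A != set0 -> fwd A != set0.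
Proof.
move=> /set0Pn [x hx]; apply/set0Pn; exists (enum_rank x); by rewrite !inE enum_rankK.
Qed.

Theorem mainTheorem4 :
  exists B : nat -> nat,
    forall (T : finType) (A : {set T}) (n k : nat) (C : mcover T),
      A != set0 ->
      exact_cover A n k C ->
      (B #|T| < n \/ B #|T| < k) ->
      decomposable A n k C.
Proof.
exists (fun m => proj1_sig (constructive_indefinite_description _ (unif m))).
move=> T A n k C hA hC hb.
have := proj2_sig (constructive_indefinite_description _ (unif #|T|)).
move=> HB; apply: transfer hC _ => C' hC'.
exact: HB (fwd_nonempty hA) n k C' hC' hb.
Qed.
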